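(* Let $G$ be a $\lambda$-graph and $Q$ a query over $G$. Then $Q^{\Downarrow}$ is an open bisimulation if and only if $[n]=[m]$ for all nodes $n,m$ with $n\,Q\,m$.
   Context: A pre-$\lambda$-graph is a directed graph whose nodes are of four kinds: an application node $@(n_1,n_2)$ has exactly two children, its left child $n_1$ and its right child $n_2$; an abstraction node $\lambda(n)$ has exactly one child, its body $n$; a free variable node has no children and carries an atom $\mathrm{id}(n)$ from a fixed set of atoms, distinct free variable nodes carrying distinct atoms; a bound variable node $\mathrm{var}(l)$ has exactly one outgoing binding edge, to an abstraction node $l$ (its binder). Letters $l,l'$ denote abstraction nodes. A trace is a finite sequence of directions from $\{\swarrow,\downarrow,\searrow\}$; $\epsilon$ is the empty trace and $d\cdot\tau$ is the trace $\tau$ extended by one final step $d$. Paths $n\xrightarrow{\tau}m$ are defined inductively: $n\xrightarrow{\epsilon}n$; if $n\xrightarrow{\tau}\lambda(m)$ then $n\xrightarrow{\downarrow\cdot\tau}m$; if $n\xrightarrow{\tau}@(m_1,m_2)$ then $n\xrightarrow{\swarrow\cdot\tau}m_1$ and $n\xrightarrow{\searrow\cdot\tau}m_2$ (binding edges are never followed). We write $n\xrightarrow{\tau}$ if $n\xrightarrow{\tau}m$ for some $m$. The path $n\xrightarrow{\tau}$ crosses a node $m$ if either $n\xrightarrow{\tau}m$, or $\tau=d\cdot\tau'$ and $n\xrightarrow{\tau'}$ crosses $m$. A root is a node $r$ such that the only path ending in $r$ has the empty trace. A node $m$ dominates $n$ if every path from a root to $n$ crosses $m$. A $\lambda$-graph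 is a pre-$\lambda$-graph that has finitely many nodes, is acyclic ($n\xrightarrow{\tau}n$ holds only for $\tau=\epsilon$), and is dominated (every bound variable node $\mathrm{var}(l)$ is dominated by its binder $l$). Two nodes are homogeneous if both are application nodes, or both abstraction nodes, or both free variable nodes, or both bound variable nodes; a binary relation $R$ on nodes is homogeneous if it only relates homogeneous nodes. Rules: $(\swarrow)$: $@(n_1,n_2)\,R\,@(m_1,m_2)$ implies $n_1\,R\,m_1$; $(\searrow)$: $@(n_1,n_2)\,R\,@(m_1,m_2)$ implies $n_2\,R\,m_2$; $(\downarrow)$: $\lambda(n)\,R\,\lambda(m)$ implies $n\,R\,m$; $(\circlearrowright)$: $\mathrm{var}(n)\,R\,\mathrm{var}(m)$ implies $n\,R\,m$. $R$ is propagated if closed under $(\swarrow),(\downarrow),(\searrow)$. $R$ is open if $n\,R\,m$ implies $n=m$ for all free variable nodes $n,m$. A bisimulation is a homogeneous propagated relation closed also under $(\circlearrowright)$. $R^{\Downarrow}$ (propagation) is the smallest propagated relation containing $R$. A query over $G$ is a binary relation on the roots of $G$. Readback. Locally nameless terms: $t::=\underline{k}\mid \mathsf{x}\mid t\,s\mid \lambda.t$ with $k\in\mathbb N$ (bound variable as de Bruijn index) and $\mathsf{x}$ an atom (free variable); equality is syntactic. For a path $n\xrightarrow{\tau}$ crossing an abstraction node $l$, the index $\mathrm{idx}(l,n\xrightarrow{\tau})$ is defined by induction on the crossing: it is $0$ if $n\xrightarrow{\tau}l$; for $n\xrightarrow{d\cdot\tau}l'$ with $l'$ an abstraction node different from $l$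 it is $\mathrm{idx}(l,n\xrightarrow{\tau})+1$; for $n\xrightarrow{d\cdot\tau}m$ with $m$ not an abstraction node it is $\mathrm{idx}(l,n\xrightarrow{\tau})$. For a root $r$ and a path $r\xrightarrow{\tau}n$, the readback $[r\xrightarrow{\tau}n]$ is: $\underline{\mathrm{idx}(l,r\xrightarrow{\tau})}$ if $n=\mathrm{var}(l)$ (well defined by domination); $\mathrm{id}(n)$ if $n$ is a free variable node; $\lambda.[r\xrightarrow{\downarrow\cdot\tau}m]$ if $n=\lambda(m)$; $[r\xrightarrow{\swarrow\cdot\tau}n_1]\,[r\xrightarrow{\searrow\cdot\tau}n_2]$ if $n=@(n_1,n_2)$. For a root $r$, $[r]:=[r\xrightarrow{\epsilon}r]$. *)

(* Defs.v *)
From Stdlib Require Import List.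
Import ListNotations.
Set Implicit Arguments.

Section LambdaGraphs.
Variables (A : Type) (V : Type).

Inductive node : Type :=
  | App (n1 n2 : V)
  | Abs (n : V)
  | FVar (a : A)
  | BVar (l : V).

Variable G : V -> node.

Definition pre_lambda_graph : Prop :=
  (forall n m a, G n = FVar a -> G m = FVar a -> n = m) /\
  (forall v l, G v = BVar l -> exists b, G l = Abs b).

Inductive dir : Type := DL | DD | DR .

(* A trace d . tau is represented as the list d :: tau (head = last step). *)
Definition trace := list dir.

Inductive path : V -> trace -> V -> Prop :=
  | path_nil n : path n [] n
  | path_abs n tau m b : path n tau m -> G m = Abs b -> path n (DD :: tau) b
  | path_appl n tau m m1 m2 : path n tau m -> G m = App m1 m2 -> path n (DL :: tau) m1
  | path_appr n tau m m1 m2 : path n tau m -> G m = App m1 m2 -> path n (DR :: tau) m2.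

Fixpoint crosses (n : V) (tau : trace) (m : V) : Prop :=
  path n tau m \/ match tau with [] => False | _ :: tau' => crosses n tau' m end.

Definition is_root (r : V) : Prop := forall n tau, path n tau r -> tau = [].

Definition dominates (m n : V) : Prop :=
  forall r tau, is_root r -> path r tau n -> crosses r tau m.

Definition finite_nodes : Prop := exists l : list V, forall v, In v l.
Definition acyclic : Prop := forall n tau, path n tau n -> tau = [].
Definition dominated : Prop := forall v l, G v = BVar l -> dominates l v.

Definition lambda_graph : Prop :=
  pre_lambda_graph /\ finite_nodes /\ acyclic /\ dominated.

Definition homogeneous_nodes (n m : V) : Prop :=
  match G n, G m with
  | App _ _, App _ _ | Abs _, Abs _ | FVar _, FVar _ | BVar _, BVar _ => True
  | _, _ => False
  end.

Definition homogeneous (R : V -> V -> Prop) : Prop :=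
  forall n m, R n m -> homogeneous_nodes n m.

Definition propagated (R : V -> V -> Prop) : Prop :=
  (forall n m n1 n2 m1 m2, R n m -> G n = App n1 n2 -> G m = App m1 m2 -> R n1 m1) /\
  (forall n m n1 n2 m1 m2, R n m -> G n = App n1 n2 -> G m = App m1 m2 -> R n2 m2) /\
  (forall n m b c, R n m -> G n = Abs b -> G m = Abs c -> R b c).

Definition var_closed (R : V -> V -> Prop) : Prop :=
  forall n m l l', R n m -> G n = BVar l -> G m = BVar l' -> R l l'.

Definition open_rel (R : V -> V -> Prop) : Prop :=
  forall n m a b, G n = FVar a -> G m = FVar b -> R n m -> n = m.

Definition bisimulation (R : V -> V -> Prop) : Prop :=
  homogeneous R /\ propagated R /\ var_closed R.

Definition open_bisimulation (R : V -> V -> Prop) : Prop :=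
  open_rel R /\ bisimulation R.

(* R^Downarrow: smallest propagated relation containing R *)
Inductive propagation (R : V -> V -> Prop) : V -> V -> Prop :=
  | prop_base n m : R n m -> propagation R n m
  | prop_l n m n1 n2 m1 m2 : propagation R n m -> G n = App n1 n2 -> G m = App m1 m2 ->
      propagation R n1 m1
  | prop_r n m n1 n2 m1 m2 : propagation R n m -> G n = App n1 n2 -> G m = App m1 m2 ->
      propagation R n2 m2
  | prop_abs n m b c : propagation R n m -> G n = Abs b -> G m = Abs c ->
      propagation R b c.

Definition query (Q : V -> V -> Prop) : Prop :=
  forall n m, Q n m -> is_root n /\ is_root m.

Inductive term : Type :=
  | Idx (k : nat)
  | Fv (a : A)
  | TApp (t s : term)
  | Lam (t : term).

Inductive idx (l : V) (n : V) : trace -> nat -> Prop :=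
  | idx_here tau : path n tau l -> idx l n tau 0
  | idx_abs d tau l' b k : path n (d :: tau) l' -> G l' = Abs b -> l' <> l ->
      idx l n tau k -> idx l n (d :: tau) (S k)
  | idx_other d tau m k : path n (d :: tau) m -> (forall b, G m <> Abs b) ->
      idx l n tau k -> idx l n (d :: tau) k.

Inductive readback_path (r : V) : trace -> V -> term -> Prop :=
  | rb_var tau n l k : G n = BVar l -> idx l r tau k -> readback_path r tau n (Idx k)
  | rb_fv tau n a : G n = FVar a -> readback_path r tau n (Fv a)
  | rb_abs tau n b t : G n = Abs b -> readback_path r (DD :: tau) b t ->
      readback_path r tau n (Lam t)
  | rb_app tau n n1 n2 t1 t2 : G n = App n1 n2 ->
      readback_path r (DL :: tau) n1 t1 -> readback_path r (DR :: tau) n2 t2 ->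
      readback_path r tau n (TApp t1 t2).

Definition readback (r : V) (t : term) : Prop := readback_path r [] r t.

End LambdaGraphs.

(* Main.v *)
Require Import Defs.
From Stdlib Require Import List Classical Lia.
Import ListNotations.

Section Aux.
Variables (A V : Type) (G : V -> node A V).

Definition step (m : V) (d : dir) (e : V) : Prop :=
  match d with
  | DD => G m = Abs A e
  | DL => exists m2, G m = App A e m2
  | DR => exists m1, G m = App A m1 e
  end.

Definition isAbs (x : V) : Prop := exists b, G x = Abs A b.

Lemma path_inv a d t e : path G a (d :: t) e -> exists m, path G a t m /\ step m d e.
Proof. intro H. inversion H; subst; eexists; split; eauto; simpl; eauto. Qed.

Lemma step_path a t m d e : path G a t m -> step m d e -> path G a (d :: t) e.
Proof.
  destruct d; simpl; intros H1 H2.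
  - destruct H2 as [m2 H2]. eapply path_appl; eauto.
  - eapply path_abs; eauto.
  - destruct H2 as [m1 H2]. eapply path_appr; eauto.
Qed.

Lemma path_det a t : forall e1 e2, path G a t e1 -> path G a t e2 -> e1 = e2.
Proof.
  induction t as [|d t IH]; intros e1 e2 H1 H2.
  - inversion H1; inversion H2; subst; reflexivity.
  - apply path_inv in H1 as [m1 [P1 S1]]. apply path_inv in H2 as [m2 [P2 S2]].
    rewrite (IH _ _ P1 P2) in S1.
    destruct d; simpl in *.
    + destruct S1 as [x S1]; destruct S2 as [y S2]; congruence.
    + congruence.
    + destruct S1 as [x S1]; destruct S2 as [y S2]; congruence.
Qed.

Lemma path_app m eps e : path G m eps e -> forall a s, path G a s m -> path G a (eps ++ s) e.
Proof.
  induction 1; intros a s Hs; simpl.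
  - exact Hs.
  - eapply path_abs; eauto.
  - eapply path_appl; eauto.
  - eapply path_appr; eauto.
Qed.

Lemma path_split eps : forall s a e, path G a (eps ++ s) e -> exists m, path G a s m /\ path G m eps e.
Proof.
  induction eps as [|d eps IH]; simpl; intros s a e H.
  - exists e; split; [exact H | constructor].
  - apply path_inv in H as [m0 [Hp Hs]].
    destruct (IH _ _ _ Hp) as [m [H1 H2]].
    exists m; split; auto. eapply step_path; eauto.
Qed.

Lemma isAbs_step a d t e x : path G a (d :: t) e -> path G a t x -> (isAbs x <-> d = DD).
Proof.
  intros H1 H2. apply path_inv in H1 as [m [Hp Hs]].
  rewrite (path_det _ _ _ _ Hp H2) in Hs.
  unfold isAbs; destruct d; simpl in Hs; split; intro HH; try discriminate; eauto.
  - destruct Hs as [m2 Hs]; destruct HH as [b Hb]; congruence.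
  - destruct Hs as [m2 Hs]; destruct HH as [b Hb]; congruence.
Qed.

Definition AbsEq (r r' : V) (t : trace) : Prop :=
  forall x y, path G r t x -> path G r' t y -> (isAbs x <-> isAbs y).

Lemma AbsEq_step r r' d t e e' :
  path G r (d :: t) e -> path G r' (d :: t) e' -> AbsEq r r' t.
Proof.
  intros H1 H2 x y Hx Hy.
  rewrite (isAbs_step _ _ _ _ _ H1 Hx). rewrite (isAbs_step _ _ _ _ _ H2 Hy). tauto.
Qed.

Lemma bound (Hac : acyclic G) (l : list V) (Hl : forall v, In v l) :
  forall a t e, path G a t e -> length t < length l.
Proof.
  intros a t.
  assert (forall e, path G a t e -> exists vs, length vs = S (length t) /\ NoDup vs /\
     forall v, In v vs -> exists eps, path G v eps e) as Hmain.
  { induction t as [|d t IH]; intros e H.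
    - exists [e]. split; [reflexivity|]. split.
      + constructor; [intros []|constructor].
      + intros v [<-|[]]. exists []; constructor.
    - apply path_inv in H as [m [Hp Hs]].
      destruct (IH _ Hp) as [vs [Hlen [Hnd Hin]]].
      exists (e :: vs). split; [simpl; lia|]. split.
      + constructor; auto. intro He. destruct (Hin _ He) as [eps Heps].
        assert (Hc : path G e (d :: eps) e) by (eapply step_path; eauto).
        apply Hac in Hc; discriminate.
      + intros v [<-|Hv]. exists []; constructor.
        destruct (Hin _ Hv) as [eps Heps]. exists (d :: eps). eapply step_path; eauto. }
  intros e H. destruct (Hmain _ H) as [vs [Hlen [Hnd _]]].
  pose proof (NoDup_incl_length Hnd (l' := l) (fun v _ => Hl v)). lia.
Qed.

Fixpoint rep (eps : trace) (j : nat) : trace :=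
  match j with 0 => [] | S j => rep eps j ++ eps end.

Lemma no_pump (N : nat) (HN : forall a t e, path G a t e -> length t < N) a c eps :
  path G a eps c -> eps <> [] ->
  (forall d, (exists e, path G a d e) -> exists e, path G c d e) -> False.
Proof.
  intros Hac Hne Himp.
  assert (forall j, exists e, path G a (rep eps j) e) as Hj.
  { induction j as [|j IH]; simpl.
    - exists a; constructor.
    - destruct (Himp _ IH) as [e1 He1]. exists e1. eapply path_app; eauto. }
  assert (forall j, j <= length (rep eps j)) as Hl.
  { induction j; simpl; [lia|]. rewrite length_app. destruct eps; [congruence|simpl]. lia. }
  destruct (Hj N) as [e He]. apply HN in He. specialize (Hl N). lia.
Qed.

Lemma hom_abs x y b : homogeneous_nodes G x y -> G x = Abs A b -> exists c, G y = Abs A c.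
Proof. unfold homogeneous_nodes; intros H E; rewrite E in H; destruct (G y); try contradiction; eauto. Qed.
Lemma hom_abs' x y c : homogeneous_nodes G x y -> G y = Abs A c -> exists b, G x = Abs A b.
Proof. unfold homogeneous_nodes; intros H E; rewrite E in H; destruct (G x); try contradiction; eauto. Qed.
Lemma hom_app x y n1 n2 : homogeneous_nodes G x y -> G x = App A n1 n2 -> exists m1 m2, G y = App A m1 m2.
Proof. unfold homogeneous_nodes; intros H E; rewrite E in H; destruct (G y); try contradiction; eauto. Qed.
Lemma hom_app' x y m1 m2 : homogeneous_nodes G x y -> G y = App A m1 m2 -> exists n1 n2, G x = App A n1 n2.
Proof. unfold homogeneous_nodes; intros H E; rewrite E in H; destruct (G x); try contradiction; eauto. Qed.
Lemma hom_fv x y a : homogeneous_nodes G x y -> G x = FVar V a -> exists b, G y = FVar V b.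
Proof. unfold homogeneous_nodes; intros H E; rewrite E in H; destruct (G y); try contradiction; eauto. Qed.
Lemma hom_bv x y l : homogeneous_nodes G x y -> G x = BVar A l -> exists l', G y = BVar A l'.
Proof. unfold homogeneous_nodes; intros H E; rewrite E in H; destruct (G y); try contradiction; eauto. Qed.

Lemma fwd R : homogeneous G R -> propagated G R ->
  forall x t e, path G x t e -> forall y, R x y -> exists f, path G y t f /\ R e f.
Proof.
  intros Hh [Pl [Pr Pa]]. induction 1; intros y Hxy.
  - exists y; split; [constructor|auto].
  - destruct (IHpath _ Hxy) as [f [Hf Hr]].
    destruct (hom_abs _ _ _ (Hh _ _ Hr) H0) as [c Hc].
    exists c; split; [eapply path_abs; eauto | eapply Pa; eauto].
  - destruct (IHpath _ Hxy) as [f [Hf Hr]].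
    destruct (hom_app _ _ _ _ (Hh _ _ Hr) H0) as [c1 [c2 Hc]].
    exists c1; split; [eapply path_appl; eauto | eapply Pl; eauto].
  - destruct (IHpath _ Hxy) as [f [Hf Hr]].
    destruct (hom_app _ _ _ _ (Hh _ _ Hr) H0) as [c1 [c2 Hc]].
    exists c2; split; [eapply path_appr; eauto | eapply Pr; eauto].
Qed.

Lemma bwd R : homogeneous G R -> propagated G R ->
  forall y t f, path G y t f -> forall x, R x y -> exists e, path G x t e /\ R e f.
Proof.
  intros Hh [Pl [Pr Pa]]. induction 1; intros x Hxy.
  - exists x; split; [constructor|auto].
  - destruct (IHpath _ Hxy) as [f [Hf Hr]].
    destruct (hom_abs' _ _ _ (Hh _ _ Hr) H0) as [c Hc].
    exists c; split; [eapply path_abs; eauto | eapply Pa; eauto].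
  - destruct (IHpath _ Hxy) as [f [Hf Hr]].
    destruct (hom_app' _ _ _ _ (Hh _ _ Hr) H0) as [c1 [c2 Hc]].
    exists c1; split; [eapply path_appl; eauto | eapply Pl; eauto].
  - destruct (IHpath _ Hxy) as [f [Hf Hr]].
    destruct (hom_app' _ _ _ _ (Hh _ _ Hr) H0) as [c1 [c2 Hc]].
    exists c2; split; [eapply path_appr; eauto | eapply Pr; eauto].
Qed.

Lemma sametrace (Q : V -> V -> Prop) r r' : Q r r' ->
  forall t n m, path G r t n -> path G r' t m -> propagation G Q n m.
Proof.
  intros Hq. induction t as [|d t IH]; intros n m H1 H2.
  - inversion H1; inversion H2; subst. now constructor.
  - apply path_inv in H1 as [m1 [P1 S1]]. apply path_inv in H2 as [m2 [P2 S2]].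
    specialize (IH _ _ P1 P2). destruct d; simpl in *.
    + destruct S1 as [x S1]; destruct S2 as [y S2]. eapply prop_l; eauto.
    + eapply prop_abs; eauto.
    + destruct S1 as [x S1]; destruct S2 as [y S2]. eapply prop_r; eauto.
Qed.

Lemma crosses_dec r t l : crosses G r t l -> exists eps s, t = eps ++ s /\ path G r s l.
Proof.
  induction t as [|d t IH]; simpl; intros [H|H].
  - exists [], []; auto.
  - contradiction.
  - exists [], (d :: t); auto.
  - destruct (IH H) as [eps [s [-> Hs]]]. exists (d :: eps), s; auto.
Qed.

Lemma idx_exists r l : forall t x, path G r t x -> crosses G r t l -> exists k, idx G l r t k.
Proof.
  induction t as [|d t IH]; intros x Hp Hc; simpl in Hc.
  - destruct Hc as [Hc|[]]. exists 0; now constructor.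
  - destruct Hc as [Hc|Hc]. exists 0; now constructor.
    pose proof Hp as Hp'. apply path_inv in Hp' as [m [Hm _]].
    destruct (IH _ Hm Hc) as [k Hk].
    destruct (classic (x = l)) as [->|Hne]. exists 0; now constructor.
    destruct (G x) eqn:Hx.
    + exists k. eapply idx_other; eauto. intros b; congruence.
    + exists (S k). eapply idx_abs; eauto.
    + exists k. eapply idx_other; eauto. intros b; congruence.
    + exists k. eapply idx_other; eauto. intros b; congruence.
Qed.

Lemma rb_inv r t x tm : readback_path G r t x tm ->
  match G x with
  | App _ n1 n2 => exists t1 t2, tm = TApp t1 t2 /\ readback_path G r (DL :: t) n1 t1 /\ readback_path G r (DR :: t) n2 t2
  | Abs _ b => exists t1, tm = Lam t1 /\ readback_path G r (DD :: t) b t1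
  | FVar _ a => tm = Fv a
  | BVar _ l => exists k, tm = Idx A k /\ idx G l r t k
  end.
Proof. destruct 1; rewrite H; eauto. Qed.

Lemma rb_exists (Hdom : dominated G) (N : nat) (HN : forall a t e, path G a t e -> length t < N) (r : V)
  (Hr : is_root G r) : forall k t x, N - length t <= k -> path G r t x -> exists tm, readback_path G r t x tm.
Proof.
  induction k as [|k IH]; intros t x Hk Hp.
  - apply HN in Hp. lia.
  - pose proof (HN _ _ _ Hp) as Hlt.
    destruct (G x) eqn:Hx.
    + destruct (IH (DL :: t) n1) as [t1 H1]; [simpl; lia| eapply path_appl; eauto|].
      destruct (IH (DR :: t) n2) as [t2 H2]; [simpl; lia| eapply path_appr; eauto|].
      exists (TApp t1 t2); eapply rb_app; eauto.
    + destruct (IH (DD :: t) n) as [t1 H1]; [simpl; lia| eapply path_abs; eauto|].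
      exists (Lam t1); eapply rb_abs; eauto.
    + exists (Fv a); eapply rb_fv; eauto.
    + destruct (idx_exists r l _ _ Hp (Hdom _ _ Hx _ _ Hr Hp)) as [kk Hkk].
      exists (Idx A kk); eapply rb_var; eauto.
Qed.

Lemma idx_match l l' r r' : isAbs l -> isAbs l' ->
  forall t k, idx G l r t k -> idx G l' r' t k -> AbsEq r r' t ->
  exists s, path G r s l /\ path G r' s l'.
Proof.
  intros Hl Hl'. induction 1 as [tau Hp|d tau l1 b k Hp Hb Hne Hi IH|d tau m k Hp Hm Hi IH];
    intros H' HA; inversion H'; subst;
    try solve [eauto];
    try solve [apply IH; auto; eapply AbsEq_step; eauto];
    exfalso;
    match goal with
    | HA : AbsEq r r' ?t, Hx : path G r ?t ?x, Hy : path G r' ?t ?y |- _ =>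
      pose proof (HA _ _ Hx Hy) as Hiff
    end; unfold isAbs in *; firstorder.
Qed.

Lemma idx_transfer l l' r r' : forall t k, idx G l r t k ->
  (forall s e, t = e ++ s -> (path G r s l <-> path G r' s l')) ->
  AbsEq r r' t -> (exists y, path G r' t y) -> idx G l' r' t k.
Proof.
  induction 1 as [tau Hp|d tau l1 b k Hp Hb Hne Hi IH|d tau m k Hp Hm Hi IH];
    intros HH HA [y Hy].
  - constructor. apply (HH tau []); auto.
  - destruct (proj1 (HA _ _ Hp Hy) (ex_intro _ b Hb)) as [c Hc].
    eapply idx_abs; eauto.
    + intros ->. apply Hne. eapply path_det; [exact Hp|]. apply (HH _ []); auto.
    + apply IH.
      * intros s e Ht. apply (HH s (d :: e)). simpl; congruence.
      * eapply AbsEq_step; eauto.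
      * apply path_inv in Hy as [m [Hm _]]; eauto.
  - eapply idx_other; eauto.
    + intros c Hc. destruct (proj2 (HA _ _ Hp Hy) (ex_intro _ c Hc)) as [b Hb]. eapply Hm; eauto.
    + apply IH.
      * intros s e Ht. apply (HH s (d :: e)). simpl; congruence.
      * eapply AbsEq_step; eauto.
      * apply path_inv in Hy as [m' [Hm' _]]; eauto.
Qed.

Lemma uniq_pos (Hac : acyclic G) a l s0 s e e' :
  path G a s0 l -> path G a s l -> e ++ s0 = e' ++ s -> s = s0.
Proof.
  intros H0 H1 He. destruct (app_eq_app _ _ _ _ He) as [l0 [[_ E]|[_ E]]].
  - subst s. apply path_split in H1 as [m [Hm1 Hm2]].
    rewrite (path_det _ _ _ _ Hm1 H0) in Hm2. apply Hac in Hm2. subst; reflexivity.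
  - subst s0. apply path_split in H0 as [m [Hm1 Hm2]].
    rewrite (path_det _ _ _ _ Hm1 H1) in Hm2. apply Hac in Hm2. subst; reflexivity.
Qed.

End Aux.

Theorem mainTheorem19 (A V : Type) (G : V -> node A V) (Q : V -> V -> Prop) :
  lambda_graph G -> query G Q ->
  (open_bisimulation G (propagation G Q) <->
   forall n m, Q n m -> exists t : term A, readback G n t /\ readback G m t).
Proof.
  intros HLG Hq. pose proof HLG as [[Hfv Hbv] [[lst Hlst] [Hac Hdom]]].
  pose proof (bound A V G Hac lst Hlst) as HN.
  split.
  - intros [Hop [Hh [Hprop Hvc]]] n m Hnm.
    destruct (Hq _ _ Hnm) as [Hrn Hrm].
    destruct (rb_exists A V G Hdom _ HN n Hrn (length lst) [] n ltac:(simpl; lia) (path_nil _ _))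
      as [tm Htm].
    exists tm; split; [exact Htm|].
    unfold readback.
    assert (forall t x tm, readback_path G n t x tm -> path G n t x -> forall y, path G m t y ->
      readback_path G m t y tm) as Htr.
    { induction 1 as [tau x l k Hx Hk|tau x a Hx|tau x b t1 Hx Hb IH|tau x n1 n2 t1 t2 Hx H1 IH1 H2 IH2];
        intros Hpx y Hpy; pose proof (sametrace A V G Q n m Hnm _ _ _ Hpx Hpy) as Rxy.
      - destruct (hom_bv A V G _ _ _ (Hh _ _ Rxy) Hx) as [l' Hy].
        pose proof (Hvc _ _ _ _ Rxy Hx Hy) as Rll.
        destruct (crosses_dec A V G _ _ _ (Hdom _ _ Hx _ _ Hrn Hpx)) as [e1 [s1 [E1 P1]]].
        destruct (crosses_dec A V G _ _ _ (Hdom _ _ Hy _ _ Hrm Hpy)) as [e2 [s2 [E2 P2]]].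
        assert (s1 = s2) as Es.
        { assert (e1 ++ s1 = e2 ++ s2) as E by congruence.
          destruct (app_eq_app _ _ _ _ E) as [l0 [[_ E']|[_ E']]].
          - destruct l0 as [|d l0]; [simpl in E'; congruence|].
            exfalso. rewrite E2 in Hpx. apply path_split in Hpx as [z [Hz _]].
            rewrite E' in Hz. apply path_split in Hz as [m0 [Hm0 Hm0z]].
            rewrite (path_det A V G _ _ _ _ Hm0 P1) in Hm0z.
            assert (Rz : propagation G Q z l').
            { eapply (sametrace A V G Q n m Hnm s2); [|exact P2].
              rewrite E'. eapply path_app; eauto. }
            eapply (no_pump A V G _ HN _ _ _ Hm0z); [discriminate|].
            intros dd [e He].
            destruct (fwd A V G _ Hh (conj (proj1 Hprop) (proj2 Hprop)) _ _ _ He _ Rll) as [f [Hf _]].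
            destruct (bwd A V G _ Hh Hprop _ _ _ Hf _ Rz) as [e' [He' _]]. eauto.
          - destruct l0 as [|d l0]; [simpl in E'; congruence|].
            exfalso. rewrite E1 in Hpy. apply path_split in Hpy as [w [Hw _]].
            rewrite E' in Hw. apply path_split in Hw as [m0 [Hm0 Hm0w]].
            rewrite (path_det A V G _ _ _ _ Hm0 P2) in Hm0w.
            assert (Rw : propagation G Q l w).
            { eapply (sametrace A V G Q n m Hnm s1); [exact P1|].
              rewrite E'. eapply path_app; eauto. }
            eapply (no_pump A V G _ HN _ _ _ Hm0w); [discriminate|].
            intros dd [e He].
            destruct (bwd A V G _ Hh Hprop _ _ _ He _ Rll) as [f [Hf _]].
            destruct (fwd A V G _ Hh Hprop _ _ _ Hf _ Rw) as [e' [He' _]]. eauto. }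
        subst s2.
        eapply rb_var; [exact Hy|].
        eapply idx_transfer; eauto.
        + intros s e Hs. subst tau. split; intro Hp.
          * rewrite (uniq_pos A V G Hac _ _ _ _ _ _ P1 Hp Hs). exact P2.
          * rewrite (uniq_pos A V G Hac _ _ _ _ _ _ P2 Hp Hs). exact P1.
        + intros x' y' Hx' Hy'.
          rewrite (path_det A V G _ _ _ _ Hx' Hpx), (path_det A V G _ _ _ _ Hy' Hpy).
          unfold isAbs. split; intros [c Hc]; congruence.
      - destruct (hom_fv A V G _ _ _ (Hh _ _ Rxy) Hx) as [b Hy].
        pose proof (Hop _ _ _ _ Hx Hy Rxy). subst y.
        eapply rb_fv; eauto.
      - destruct (hom_abs A V G _ _ _ (Hh _ _ Rxy) Hx) as [c Hy].
        eapply rb_abs; [exact Hy|]. apply IH; eapply path_abs; eauto.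
      - destruct (hom_app A V G _ _ _ _ (Hh _ _ Rxy) Hx) as [c1 [c2 Hy]].
        eapply rb_app; [exact Hy| |].
        + apply IH1; eapply path_appl; eauto.
        + apply IH2; eapply path_appr; eauto. }
    eapply Htr; eauto; constructor.
  - intros Hrb.
    assert (forall n m, propagation G Q n m -> exists r r' t tm, Q r r' /\ path G r t n /\
      path G r' t m /\ readback_path G r t n tm /\ readback_path G r' t m tm) as Hinv.
    { induction 1 as [n m Hnm|n m n1 n2 m1 m2 Hp IH Hn Hm|n m n1 n2 m1 m2 Hp IH Hn Hm|n m b c Hp IH Hn Hm].
      - destruct (Hrb _ _ Hnm) as [tm [H1 H2]]. exists n, m, [], tm; repeat split; auto; constructor.
      - destruct IH as [r [r' [t [tm [Hq' [P1 [P2 [R1 R2]]]]]]]].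
        apply rb_inv in R1; apply rb_inv in R2. rewrite Hn in R1; rewrite Hm in R2.
        destruct R1 as [a1 [a2 [E1 [R1 _]]]]; destruct R2 as [b1 [b2 [E2 [R2 _]]]].
        subst. injection E2 as <- <-.
        exists r, r', (DL :: t), a1; repeat split; auto; eapply path_appl; eauto.
      - destruct IH as [r [r' [t [tm [Hq' [P1 [P2 [R1 R2]]]]]]]].
        apply rb_inv in R1; apply rb_inv in R2. rewrite Hn in R1; rewrite Hm in R2.
        destruct R1 as [a1 [a2 [E1 [_ R1]]]]; destruct R2 as [b1 [b2 [E2 [_ R2]]]].
        subst. injection E2 as <- <-.
        exists r, r', (DR :: t), a2; repeat split; auto; eapply path_appr; eauto.
      - destruct IH as [r [r' [t [tm [Hq' [P1 [P2 [R1 R2]]]]]]]].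
        apply rb_inv in R1; apply rb_inv in R2. rewrite Hn in R1; rewrite Hm in R2.
        destruct R1 as [a1 [E1 R1]]; destruct R2 as [b1 [E2 R2]].
        subst. injection E2 as <-.
        exists r, r', (DD :: t), a1; repeat split; auto; eapply path_abs; eauto. }
    split; [|split; [|split]].
    + intros n m a b Hn Hm Hp.
      destruct (Hinv _ _ Hp) as [r [r' [t [tm [Hq' [P1 [P2 [R1 R2]]]]]]]].
      apply rb_inv in R1; apply rb_inv in R2. rewrite Hn in R1; rewrite Hm in R2.
      subst. injection R2 as <-. eauto.
    + intros n m Hp.
      destruct (Hinv _ _ Hp) as [r [r' [t [tm [Hq' [P1 [P2 [R1 R2]]]]]]]].
      apply rb_inv in R1; apply rb_inv in R2. unfold homogeneous_nodes.
      destruct (G n); destruct (G m); try exact I; exfalso;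
        repeat match goal with H : exists _, _ |- _ => destruct H end;
        intuition congruence.
    + split; [|split]; intros; [eapply prop_l|eapply prop_r|eapply prop_abs]; eauto.
    + intros n m l l' Hp Hn Hm.
      destruct (Hinv _ _ Hp) as [r [r' [t [tm [Hq' [P1 [P2 [R1 R2]]]]]]]].
      apply rb_inv in R1; apply rb_inv in R2. rewrite Hn in R1; rewrite Hm in R2.
      destruct R1 as [k [E1 I1]]; destruct R2 as [k' [E2 I2]]. subst. injection E2 as <-.
      destruct (Hbv _ _ Hn) as [b Hb]. destruct (Hbv _ _ Hm) as [c Hc].
      destruct (idx_match A V G l l' r r' (ex_intro _ b Hb) (ex_intro _ c Hc) _ _ I1 I2) as [s [S1 S2]].
      * intros x y Hx Hy.
        rewrite (path_det A V G _ _ _ _ Hx P1), (path_det A V G _ _ _ _ Hy P2).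
        unfold isAbs. split; intros [d Hd]; congruence.
      * eapply sametrace; eauto.
Qed.
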